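(* Let $S,C,D,\Delta\ge1$, $\mathcal{X}\subseteq\mathbb{R}^D$ nonempty convex compact, and $f_h$, $h=1,\dots,C$, convex continuously differentiable with gradients $g_h$ satisfying $\|g_h(x)\|\le L_h$ on $\mathcal{X}$. Suppose the weights $W_{i,k}[J,h]\ge0$ are nonnegative and satisfy SLC with constant $M>0$, the server graph is complete (consensus step $x^I_{0,k+1}=\frac1S\sum_{J=1}^S x^J_{\Delta,k}$), and all servers start from the same point $x^J_{0,0}=x_{0,0}\in\mathcal{X}$; let $x_{0,k}$ be the common value of $x^J_{0,k}$. Then for all $y\in\mathcal{X}$ and all $k\ge0$, $$\|x_{0,k+1}-y\|^2\le\|x_{0,k}-y\|^2-\tfrac{2M}{S}\alpha_k\big(f(x_{0,k})-f(y)\big)+\tfrac1S\alpha_k^2C_0^2,$$ where $C_0^2=\sum_{J=1}^S\sum_{i=1}^{\Delta}\Big[\big(\sum_{h=1}^C W_{i-1,k}[J,h]L_h\big)^2+2\big(\sum_{h=1}^C W_{i-1,k}[J,h]L_h\big)\big(\sum_{t=1}^{i-1}\sum_{l=1}^C W_{t-1,k}[J,l]L_l\big)\Big].$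
   Context: $\mathcal{P}_{\mathcal{X}}$ is Euclidean projection onto $\mathcal{X}$; $f=\sum_{h=1}^Cf_h$; step sizes $\alpha_k>0$. Weight matrices $W_{i,k}\in\mathbb{R}^{S\times C}$ ($0\le i\le\Delta-1$, $k\ge0$). Symmetric Learning Condition (SLC): there is $M>0$ with $\sum_{i=1}^{\Delta}\sum_{J=1}^S W_{i-1,k}[J,h]=M$ for all $k\ge0$ and all $h$. Iteration: for each $k\ge0$ and $i=1,\dots,\Delta$, $x^J_{i,k}=\mathcal{P}_{\mathcal{X}}\big[x^J_{i-1,k}-\alpha_k\sum_{h=1}^C W_{i-1,k}[J,h]\,g_h(x^J_{i-1,k})\big]$, followed by the consensus step. *)

(* Defs.v *)
From mathcomp Require Import all_boot.
From Stdlib Require Import Reals.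
Set Implicit Arguments. Unset Strict Implicit. Unset Printing Implicit Defensive.
Local Open Scope R_scope.

Definition rsum (n : nat) (F : 'I_n -> R) : R := \big[Rplus/0]_(i < n) F i.

Definition vec (D : nat) := 'I_D -> R.
Definition vadd D (x y : vec D) : vec D := fun i => x i + y i.
Definition vsub D (x y : vec D) : vec D := fun i => x i - y i.
Definition vscale D (a : R) (x : vec D) : vec D := fun i => a * x i.
Definition vzero D : vec D := fun _ => 0.
Definition vsum D n (F : 'I_n -> vec D) : vec D := \big[@vadd D/@vzero D]_(j < n) F j.
Definition dot D (x y : vec D) : R := rsum (fun i => x i * y i).
Definition vnorm D (x : vec D) : R := sqrt (dot x x).

Definition convex_set D (X : vec D -> Prop) : Prop :=
  forall x y t, X x -> X y -> 0 <= t <= 1 ->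
    X (vadd (vscale t x) (vscale (1 - t) y)).
Definition closed_set D (X : vec D -> Prop) : Prop :=
  forall (u : nat -> vec D) (z : vec D),
    (forall n, X (u n)) -> (forall i, Un_cv (fun n => u n i) (z i)) -> X z.
Definition bounded_set D (X : vec D -> Prop) : Prop :=
  exists B, forall x, X x -> vnorm x <= B.
Definition compact_set D (X : vec D -> Prop) : Prop :=
  closed_set X /\ bounded_set X.

Definition convex_fun D (f : vec D -> R) : Prop :=
  forall x y t, 0 <= t <= 1 ->
    f (vadd (vscale t x) (vscale (1 - t) y)) <= t * f x + (1 - t) * f y.

Definition is_gradient D (f : vec D -> R) (g : vec D -> vec D) : Prop :=
  forall x eps, 0 < eps -> exists delta, 0 < delta /\
    forall y, vnorm (vsub y x) < delta ->
      Rabs (f y - f x - dot (g x) (vsub y x)) <= eps * vnorm (vsub y x).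

Definition vcontinuous D (g : vec D -> vec D) : Prop :=
  forall x eps, 0 < eps -> exists delta, 0 < delta /\
    forall y, vnorm (vsub y x) < delta -> vnorm (vsub (g y) (g x)) < eps.

Definition is_proj D (X : vec D -> Prop) (x z : vec D) : Prop :=
  X z /\ forall y, X y -> vnorm (vsub x z) <= vnorm (vsub x y).

Fixpoint local_iter D Sn C (P : vec D -> vec D) (alpha : nat -> R)
    (W : nat -> nat -> 'I_Sn -> 'I_C -> R) (g : 'I_C -> vec D -> vec D)
    (k : nat) (x : vec D) (J : 'I_Sn) (i : nat) : vec D :=
  match i with
  | O => x
  | i'.+1 =>
      let z := local_iter P alpha W g k x J i' in
      P (vsub z (vscale (alpha k) (vsum (fun h : 'I_C => vscale (W i' k J h) (g h z)))))
  end.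

Fixpoint server_iter D Sn C (Delta : nat) (P : vec D -> vec D) (alpha : nat -> R)
    (W : nat -> nat -> 'I_Sn -> 'I_C -> R) (g : 'I_C -> vec D -> vec D)
    (x00 : vec D) (k : nat) : vec D :=
  match k with
  | O => x00
  | k'.+1 =>
      vscale (1 / INR Sn)
        (vsum (fun J : 'I_Sn =>
           local_iter P alpha W g k' (server_iter Delta P alpha W g x00 k') J Delta))
  end.

(* C_0^2 at iteration k (indices shifted: i' = i-1, t' = t-1). *)
Definition C0sq Sn C (Delta : nat) (W : nat -> nat -> 'I_Sn -> 'I_C -> R)
    (L : 'I_C -> R) (k : nat) : R :=
  let A := fun (m : nat) (J : 'I_Sn) => rsum (fun h : 'I_C => W m k J h * L h) in
  rsum (fun J : 'I_Sn => rsum (fun i : 'I_Delta =>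
     (A i J) ^ 2 + 2 * A i J * rsum (fun t : 'I_i => A t J))).

(* Main.v *)
Require Import Defs.
From HB Require Import structures.
From mathcomp Require Import all_boot.
From Stdlib Require Import Reals Lra FunctionalExtensionality.
Local Open Scope R_scope.
Set Warnings "-redundant-canonical-projection".
Set Implicit Arguments. Unset Strict Implicit.


Lemma Rplus_assoc' : associative Rplus. Proof. move=> x y z; ring. Qed.
HB.instance Definition _ := Monoid.isComLaw.Build R 0 Rplus Rplus_assoc' Rplus_comm Rplus_0_l.

Section V.
Variable D : nat.
Lemma vadd_assoc : associative (@vadd D).
Proof. move=> x y z; apply: functional_extensionality => i; rewrite /vadd; ring. Qed.
Lemma vadd_comm : commutative (@vadd D).
Proof. move=> x y; apply: functional_extensionality => i; rewrite /vadd; ring. Qed.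
Lemma vadd_0l : left_id (@vzero D) (@vadd D).
Proof. move=> x; apply: functional_extensionality => i; rewrite /vadd /vzero; ring. Qed.
End V.
HB.instance Definition _ D := Monoid.isComLaw.Build (vec D) (@vzero D) (@vadd D) (@vadd_assoc D) (@vadd_comm D) (@vadd_0l D).

Lemma rsum0 (F : 'I_0 -> R) : rsum F = 0.
Proof. by rewrite /rsum big_ord0. Qed.
Lemma rsumS n (F : 'I_n.+1 -> R) : rsum F = rsum (fun i : 'I_n => F (widen_ord (leqnSn n) i)) + F ord_max.
Proof. by rewrite /rsum big_ord_recr. Qed.
Lemma rsum_ext n (F G : 'I_n -> R) : (forall i, F i = G i) -> rsum F = rsum G.
Proof. move=> H; rewrite /rsum; apply: eq_bigr => i _; exact: H. Qed.
Lemma rsum_add n (F G : 'I_n -> R) : rsum (fun i => F i + G i) = rsum F + rsum G.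
Proof. by rewrite /rsum big_split. Qed.
Lemma rsum_scal n a (F : 'I_n -> R) : rsum (fun i => a * F i) = a * rsum F.
Proof. elim: n F => [|n IH] F; first by rewrite !rsum0; ring.
rewrite !rsumS IH; ring. Qed.
Lemma rsum_opp n (F : 'I_n -> R) : rsum (fun i => - F i) = - rsum F.
Proof. have -> : rsum (fun i => - F i) = rsum (fun i => -1 * F i) by apply: rsum_ext => i; ring.
rewrite rsum_scal; ring. Qed.
Lemma rsum_sub n (F G : 'I_n -> R) : rsum (fun i => F i - G i) = rsum F - rsum G.
Proof. rewrite /Rminus -rsum_opp -rsum_add //. Qed.
Lemma rsum_le n (F G : 'I_n -> R) : (forall i, F i <= G i) -> rsum F <= rsum G.
Proof. elim: n F G => [|n IH] F G H; first by rewrite !rsum0; lra.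
rewrite !rsumS; apply: Rplus_le_compat; [apply: IH => i|]; apply: H. Qed.
Lemma rsum_ge0 n (F : 'I_n -> R) : (forall i, 0 <= F i) -> 0 <= rsum F.
Proof. move=> H.
have E : rsum (fun _ : 'I_n => 0) = 0.
 elim: n {F H} => [|n IH]; first by rewrite rsum0. by rewrite rsumS IH; ring.
rewrite -E; by apply: rsum_le. Qed.
Lemma rsum_exch m n (F : 'I_m -> 'I_n -> R) :
  rsum (fun i => rsum (fun j => F i j)) = rsum (fun j => rsum (fun i => F i j)).
Proof. rewrite /rsum; exact: exchange_big. Qed.
Lemma rsum_const n a : rsum (fun _ : 'I_n => a) = INR n * a.
Proof. elim: n => [|n IH]; first by rewrite rsum0 /=; ring.
rewrite rsumS IH S_INR; ring. Qed.
Lemma vsum_app D n (F : 'I_n -> vec D) i : vsum F i = rsum (fun j => F j i).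
Proof. elim: n F => [|n IH] F; first by rewrite /vsum big_ord0 rsum0.
rewrite /vsum big_ord_recr rsumS /= /vadd; congr (_ + _); exact: IH. Qed.


Section N.
Variable D : nat.
Implicit Types x y z u : vec D.

Lemma dot_ext x x' y y' : (forall i, x i = x' i) -> (forall i, y i = y' i) -> dot x y = dot x' y'.
Proof. move=> H1 H2; rewrite /dot; apply: rsum_ext => i; by rewrite H1 H2. Qed.
Lemma vnorm_ext x x' : (forall i, x i = x' i) -> vnorm x = vnorm x'.
Proof. move=> H; rewrite /vnorm (dot_ext H H) //. Qed.
Lemma dot_sym x y : dot x y = dot y x.
Proof. rewrite /dot; apply: rsum_ext => i; ring. Qed.
Lemma dot_ge0 x : 0 <= dot x x.
Proof. apply: rsum_ge0 => i; nra. Qed.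
Lemma vnorm_ge0 x : 0 <= vnorm x.
Proof. exact: sqrt_pos. Qed.
Lemma vnorm_sq x : vnorm x ^ 2 = dot x x.
Proof. rewrite /vnorm /= Rmult_1_r sqrt_sqrt //; exact: dot_ge0. Qed.
Lemma dot_quad x y t :
  dot (fun i => x i - t * y i) (fun i => x i - t * y i) = dot x x - 2 * t * dot x y + t ^ 2 * dot y y.
Proof.
rewrite /dot.
have -> : rsum (fun i => (x i - t * y i) * (x i - t * y i)) =
  rsum (fun i => x i * x i - (2 * t) * (x i * y i) + t^2 * (y i * y i)).
  apply: rsum_ext => i; ring.
by rewrite rsum_add rsum_sub !rsum_scal.
Qed.
Lemma dot_scall a x y : dot (fun i => a * x i) y = a * dot x y.
Proof. rewrite /dot -rsum_scal; apply: rsum_ext => i; ring. Qed.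
Lemma dot_addl x x' y : dot (fun i => x i + x' i) y = dot x y + dot x' y.
Proof. rewrite /dot -rsum_add; apply: rsum_ext => i; ring. Qed.
Lemma dot_subl x x' y : dot (fun i => x i - x' i) y = dot x y - dot x' y.
Proof. rewrite /dot -rsum_sub; apply: rsum_ext => i; ring. Qed.

Lemma quad_disc a b c : (forall t, 0 <= c - 2 * t * b + t ^ 2 * a) -> 0 <= a -> b ^ 2 <= a * c.
Proof.
move=> H Ha. case: (Rle_lt_or_eq_dec _ _ Ha) => Ha'.
- have := H (b / a). have -> : c - 2 * (b / a) * b + (b / a) ^ 2 * a = c - b^2 / a by field; lra.
  move=> H1. have : 0 <= (c - b ^ 2 / a) * a by apply: Rmult_le_pos; lra.
  have -> : (c - b ^ 2 / a) * a = a * c - b^2 by field; lra. lra.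
- subst a. case: (Req_dec b 0) => Hb; first by subst; nra.
  have := H ((c + 1) / (2 * b)).
  have -> : c - 2 * ((c + 1) / (2 * b)) * b + ((c + 1) / (2 * b)) ^ 2 * 0 = -1 by field.
  lra.
Qed.

Lemma cs x y : dot x y <= vnorm x * vnorm y.
Proof.
have Hd : (dot x y) ^ 2 <= dot y y * dot x x.
  apply: quad_disc; last exact: dot_ge0.
  move=> t; rewrite -dot_quad; exact: dot_ge0.
rewrite /vnorm -sqrt_mult; try exact: dot_ge0.
apply: Rle_trans (Rle_abs _) _.
rewrite -sqrt_Rsqr_abs; apply: sqrt_le_1_alt. rewrite /Rsqr. nra.
Qed.

Lemma vnorm_le_sq x y : vnorm x <= vnorm y -> dot x x <= dot y y.
Proof. move=> H; rewrite -!vnorm_sq; apply: pow_incr; split => //; exact: vnorm_ge0. Qed.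
Lemma sq_le_vnorm x y : dot x x <= dot y y -> vnorm x <= vnorm y.
Proof. move=> H; exact: sqrt_le_1_alt. Qed.

Lemma vnorm_add x y : vnorm (vadd x y) <= vnorm x + vnorm y.
Proof.
rewrite {1}/vnorm. rewrite -(sqrt_pow2 (vnorm x + vnorm y)); last first.
  apply: Rplus_le_le_0_compat; exact: vnorm_ge0.
apply: sqrt_le_1_alt. rewrite /vadd dot_addl (dot_sym x) (dot_sym y) !dot_addl.
have := cs x y. have := vnorm_sq x. have := vnorm_sq y. rewrite dot_sym => *.
nra.
Qed.

Lemma vnorm_scale a x : vnorm (vscale a x) = Rabs a * vnorm x.
Proof.
rewrite /vnorm /vscale dot_scall dot_sym dot_scall.
rewrite -Rmult_assoc sqrt_mult.
- rewrite -/(Rsqr a) sqrt_Rsqr_abs //.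
- nra.
- exact: dot_ge0.
Qed.

Lemma vnorm_vsum n (F : 'I_n -> vec D) : vnorm (vsum F) <= rsum (fun j => vnorm (F j)).
Proof.
elim: n F => [|n IH] F.
  rewrite rsum0 /vnorm (dot_ext (x' := fun _ => 0) (y' := fun _ => 0)); try by move=> i; rewrite vsum_app rsum0.
  rewrite /dot (rsum_ext (G := fun _ => 0)) ?rsum_const; last by move=> i; ring.
  rewrite Rmult_0_r sqrt_0; lra.
rewrite rsumS.
rewrite (vnorm_ext (x' := vadd (vsum (fun i : 'I_n => F (widen_ord (leqnSn n) i))) (F ord_max))); last first.
  by move=> i; rewrite /vadd !vsum_app rsumS.
apply: Rle_trans (vnorm_add _ _) _. apply: Rplus_le_compat_r; exact: IH.
Qed.

End N.


Lemma div_le1 a b : 0 < b -> a <= b -> a / b <= 1.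
Proof. move=> Hb H. apply: (Rmult_le_reg_r b) => //. rewrite /Rdiv Rmult_assoc Rinv_l; lra. Qed.
Lemma div_lt1 a b : 0 < b -> a < b -> a / b < 1.
Proof. move=> Hb H. apply: (Rmult_lt_reg_r b) => //. rewrite /Rdiv Rmult_assoc Rinv_l; lra. Qed.
Lemma abs_lo z : - z <= Rabs z.
Proof. rewrite -Rabs_Ropp; exact: Rle_abs. Qed.

Section G.
Variable D : nat.
Implicit Types x y z u : vec D.

Lemma grad_ineq (f : vec D -> R) g : convex_fun f -> is_gradient f g ->
  forall x y, f x + dot (g x) (vsub y x) <= f y.
Proof.
move=> Hc Hg x y.
set v := vsub y x. set b := dot (g x) v. set d := f y - f x. set nv := vnorm v.
have Hnv : 0 <= nv by exact: vnorm_ge0.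
apply: Rnot_lt_le => Hlt.
have Hbd : 0 < b - d by rewrite /d; lra.
set eps := (b - d) / (2 * (nv + 1)).
have Heps : 0 < eps by rewrite /eps; apply: Rdiv_lt_0_compat; lra.
have [delta [Hdel Hy]] := Hg x eps Heps.
set t := delta / (delta + 2 * nv + 1).
have Ht0 : 0 < t by rewrite /t; apply: Rdiv_lt_0_compat; lra.
have Ht1 : t <= 1 by rewrite /t; apply: div_le1; lra.
have Htn : t * nv < delta.
  rewrite /t. have -> : delta / (delta + 2 * nv + 1) * nv = delta * (nv / (delta + 2 * nv + 1)) by field; lra.
  have : nv / (delta + 2 * nv + 1) < 1 by apply: div_lt1; lra.
  nra.
set w := vadd (vscale t y) (vscale (1 - t) x).
have Hwx : forall i, vsub w x i = t * v i by move=> i; rewrite /w /vsub /vadd /vscale /v /vsub; ring.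
have Hnw : vnorm (vsub w x) = t * nv.
  rewrite (vnorm_ext Hwx) -/(vscale t v) vnorm_scale Rabs_pos_eq //; lra.
have Hdw : dot (g x) (vsub w x) = t * b.
  rewrite dot_sym (dot_ext Hwx (fun i => erefl)) dot_scall dot_sym //.
have := Hy w; rewrite Hnw Hdw => /(_ Htn) Habs.
have := abs_lo (f w - f x - t * b). move=> H2.
have Hcv := Hc y x t (conj (Rlt_le _ _ Ht0) Ht1). rewrite -/w in Hcv.
have : t * (b - d) <= t * (eps * nv) by rewrite /d; nra.
move=> H3. have : b - d <= eps * nv by nra.
rewrite /eps => H4.
have : (b - d) / (2 * (nv + 1)) * nv <= (b - d) / 2.
  have -> : (b - d) / (2 * (nv + 1)) * nv = (b - d) / 2 * (nv / (nv + 1)) by field; lra.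
  have : nv / (nv + 1) <= 1 by apply: div_le1; lra.
  nra.
lra.
Qed.

Lemma proj_var (X : vec D -> Prop) u z y : convex_set X -> is_proj X u z -> X y ->
  dot (vsub u z) (vsub y z) <= 0.
Proof.
move=> Hcv [Hz Hmin] Hy.
set a := vsub u z. set b := vsub y z.
have key : forall t, 0 < t <= 1 -> 2 * t * dot a b <= t ^ 2 * dot b b.
  move=> t Ht.
  have HX' := Hcv y z t Hy Hz ltac:(lra).
  have := Hmin _ HX' => /vnorm_le_sq.
  have E : forall i, vsub u (vadd (vscale t y) (vscale (1 - t) z)) i = a i - t * b i.
    by move=> i; rewrite /a /b /vsub /vadd /vscale; ring.
  rewrite (dot_ext E E) dot_quad -/a => H. lra.
apply: Rnot_lt_le => Hab.
have Hbb := dot_ge0 b.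
case: (Rle_lt_or_eq_dec _ _ Hbb) => Hb.
- set t := dot a b / (dot b b + dot a b).
  have Ht0 : 0 < t by rewrite /t; apply: Rdiv_lt_0_compat; lra.
  have Ht1 : t <= 1 by rewrite /t; apply: div_le1; lra.
  have := key t (conj Ht0 Ht1).
  have : t * dot b b < dot a b.
    rewrite /t. have -> : dot a b / (dot b b + dot a b) * dot b b = dot a b * (dot b b / (dot b b + dot a b)) by field; lra.
    have : dot b b / (dot b b + dot a b) < 1 by apply: div_lt1; lra.
    nra.
  nra.
- have := key 1 ltac:(lra). rewrite -Hb. lra.
Qed.

Lemma proj_nonexp (X : vec D -> Prop) u z y : convex_set X -> is_proj X u z -> X y ->
  dot (vsub z y) (vsub z y) <= dot (vsub u y) (vsub u y).
Proof.
move=> Hcv Hp Hy. have := proj_var Hcv Hp Hy.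
set a := vsub u z. set b := vsub y z.
have E1 : forall i, vsub z y i = 0 - 1 * b i by move=> i; rewrite /b /vsub; ring.
have E2 : forall i, vsub u y i = a i - 1 * b i by move=> i; rewrite /a /b /vsub; ring.
rewrite (dot_ext E1 E1) (dot_ext E2 E2) !dot_quad.
have -> : dot (fun _ : 'I_D => 0) b = 0.
  rewrite /dot (rsum_ext (G := fun _ => 0)) ?rsum_const; first ring. move=> i; ring.
have -> : dot (fun _ : 'I_D => 0) (fun _ : 'I_D => 0) = 0.
  rewrite /dot (rsum_ext (G := fun _ => 0)) ?rsum_const; first ring. move=> i; ring.
have := dot_ge0 a. lra.
Qed.

End G.


Lemma INR_pos n : (0 < n)%nat -> 0 < INR n.
Proof. move=> H; apply: lt_0_INR; apply/ltP. exact: H. Qed.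

Lemma sq_avg n (a : 'I_n -> R) : (0 < n)%nat ->
  (1 / INR n * rsum a) ^ 2 <= 1 / INR n * rsum (fun j => a j ^ 2).
Proof.
move=> Hn. have Hn' := INR_pos Hn.
set m := 1 / INR n * rsum a.
have H0 : 0 <= rsum (fun j => (a j - m) ^ 2) by apply: rsum_ge0 => j; apply: pow2_ge_0.
have E : rsum (fun j => (a j - m) ^ 2) = rsum (fun j => a j ^ 2) - 2 * m * rsum a + INR n * m ^ 2.
  have -> : rsum (fun j => (a j - m) ^ 2) = rsum (fun j => a j ^ 2 - 2 * m * a j + m ^ 2).
    apply: rsum_ext => j; ring.
  by rewrite rsum_add rsum_sub rsum_scal rsum_const.
have Es : rsum a = INR n * m by rewrite /m; field; lra.
rewrite E Es in H0.
have : INR n * m ^ 2 <= rsum (fun j => a j ^ 2) by nra.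
move=> H1. apply: (Rmult_le_reg_l (INR n)) => //.
have -> : INR n * (1 / INR n * rsum (fun j => a j ^ 2)) = rsum (fun j => a j ^ 2) by field; lra.
exact: H1.
Qed.

Section J.
Variable D : nat.
Lemma jensen n (p : 'I_n -> vec D) y : (0 < n)%nat ->
  dot (vsub (vscale (1 / INR n) (vsum p)) y) (vsub (vscale (1 / INR n) (vsum p)) y)
  <= 1 / INR n * rsum (fun j => dot (vsub (p j) y) (vsub (p j) y)).
Proof.
move=> Hn. have Hn' := INR_pos Hn.
rewrite /dot.
rewrite rsum_exch -rsum_scal.
apply: rsum_le => i.
have E : vsub (vscale (1 / INR n) (vsum p)) y i = 1 / INR n * rsum (fun j => vsub (p j) y i).
  rewrite /vsub /vscale vsum_app.
  have -> : rsum (fun j => p j i - y i) = rsum (fun j => p j i) - rsum (fun _ : 'I_n => y i) by rewrite rsum_sub.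
  rewrite rsum_const; field; lra.
rewrite E.
have := sq_avg (fun j => vsub (p j) y i) Hn. rewrite /= !Rmult_1_r.
move=> H. apply: (Rle_trans _ _ _ H); right; congr (_ * _); apply: rsum_ext => j; ring.
Qed.

Lemma avg_X (X : vec D -> Prop) n (p : 'I_n -> vec D) : convex_set X -> (0 < n)%nat ->
  (forall j, X (p j)) -> X (vscale (1 / INR n) (vsum p)).
Proof.
move=> Hc. elim: n p => [|n IH] p Hn Hp; first by [].
case: n IH p Hn Hp => [|n] IH p Hn Hp.
  have -> : vscale (1 / INR 1) (vsum p) = p ord0.
    apply: functional_extensionality => i. rewrite /vscale vsum_app rsumS rsum0 /=.
    have -> : (ord_max : 'I_1) = ord0 by apply: val_inj.
    field.
  exact: Hp.
set q := fun j : 'I_n.+1 => p (widen_ord (leqnSn n.+1) j).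
have Hq := IH q (ltn0Sn n) (fun j => Hp _).
have Hn1 : 0 < INR n.+1 by apply: INR_pos.
set t := INR n.+1 / INR n.+2.
have -> : vscale (1 / INR n.+2) (vsum p) = vadd (vscale t (vscale (1 / INR n.+1) (vsum q))) (vscale (1 - t) (p ord_max)).
  apply: functional_extensionality => i. rewrite /vadd /vscale !vsum_app rsumS /t -/q.
  have Er : rsum (q^~ i) = rsum (fun i0 : 'I_n.+1 => p (widen_ord (leqnSn n.+1) i0) i) by [].
  rewrite Er [INR n.+2]S_INR. field; lra.
apply: Hc => //. rewrite /t; split.
  apply: Rlt_le; apply: Rdiv_lt_0_compat; try lra. rewrite [INR n.+2]S_INR; lra.
apply: div_le1; rewrite [INR n.+2]S_INR; lra.
Qed.
End J.


Definition nsum n (G : nat -> R) := rsum (fun i : 'I_n => G i).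
Lemma nsumS n G : nsum n.+1 G = nsum n G + G n.
Proof. by rewrite /nsum rsumS. Qed.
Lemma nsum0 G : nsum 0 G = 0.
Proof. exact: rsum0. Qed.

Lemma dot_vsum D n (F : 'I_n -> vec D) w : dot (vsum F) w = rsum (fun h => dot (F h) w).
Proof.
rewrite /dot. have -> : rsum (fun i => vsum F i * w i) = rsum (fun i => rsum (fun h => F h i * w i)).
  apply: rsum_ext => i; rewrite vsum_app Rmult_comm -rsum_scal. apply: rsum_ext => h; ring.
by rewrite rsum_exch.
Qed.

Lemma cs_neg D (a b : vec D) : - dot a b <= vnorm a * vnorm b.
Proof.
have := cs a (vscale (-1) b). rewrite vnorm_scale Rabs_Ropp Rabs_R1 Rmult_1_l.
rewrite dot_sym /vscale dot_scall dot_sym. lra.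
Qed.

Lemma local_lemma S C D (X : vec D -> Prop) (HXconv : convex_set X)
  (P : vec D -> vec D) (HP : forall x, is_proj X x (P x))
  (f : 'I_C -> vec D -> R) (g : 'I_C -> vec D -> vec D) (L : 'I_C -> R)
  (Hfconv : forall h, convex_fun (f h))
  (Hgrad : forall h, is_gradient (f h) (g h))
  (HL : forall h x, X x -> vnorm (g h x) <= L h) (HL0 : forall h, 0 <= L h)
  (alpha : nat -> R) (W : nat -> nat -> 'I_S -> 'I_C -> R)
  (HWnn : forall i k J h, 0 <= W i k J h)
  k (Ha : 0 <= alpha k) x (Hx : X x) J y (Hy : X y) :
  let z := local_iter P alpha W g k x J in
  let A := fun m => rsum (fun h => W m k J h * L h) in
  forall i,
  X (z i) /\ vnorm (vsub (z i) x) <= alpha k * nsum i A /\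
  dot (vsub (z i) y) (vsub (z i) y) <= dot (vsub x y) (vsub x y)
     - 2 * alpha k * nsum i (fun m => rsum (fun h => W m k J h * (f h x - f h y)))
     + alpha k ^ 2 * nsum i (fun m => A m ^ 2 + 2 * A m * nsum m A).
Proof.
move=> z A. elim => [|i [IHX [IHd IHm]]].
  rewrite /z /= !nsum0.
  have -> : vnorm (vsub x x) = 0.
    rewrite (vnorm_ext (x' := vscale 0 x)); last by move=> j; rewrite /vsub /vscale; ring.
    rewrite vnorm_scale Rabs_R0; ring.
  split => //; split; lra.
set zi := z i.
set d := vsum (fun h => vscale (W i k J h) (g h zi)).
set u := vsub zi (vscale (alpha k) d).
have Ez : z i.+1 = P u by [].
have [HXP _] := HP u.
have HA0 : 0 <= A i by apply: rsum_ge0 => h; apply: Rmult_le_pos.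
have Hd : vnorm d <= A i.
  apply: (Rle_trans _ _ _ (vnorm_vsum _)). apply: rsum_le => h.
  rewrite vnorm_scale Rabs_pos_eq //. apply: Rmult_le_compat_l => //. exact: HL.
have Hd0 := vnorm_ge0 d.
have Huz : vnorm (vsub u zi) = alpha k * vnorm d.
  rewrite (vnorm_ext (x' := vscale (- alpha k) d)); last by move=> j; rewrite /u /vsub /vscale; ring.
  by rewrite vnorm_scale Rabs_Ropp Rabs_pos_eq.
have HPz : vnorm (vsub (P u) zi) <= vnorm (vsub u zi).
  apply: sq_le_vnorm; exact: (proj_nonexp HXconv (HP u) IHX).
rewrite Ez nsumS; split => //; split.
  rewrite (vnorm_ext (x' := vadd (vsub (P u) zi) (vsub zi x))); last by move=> j; rewrite /vadd /vsub; ring.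
  apply: (Rle_trans _ _ _ (vnorm_add _ _)). rewrite -/zi in IHd. nra.
have H1 := proj_nonexp HXconv (HP u) Hy.
apply: Rle_trans H1 _.
have Eu : forall j, vsub u y j = vsub zi y j - alpha k * d j by move=> j; rewrite /u /vsub /vscale; ring.
rewrite (dot_ext Eu Eu) dot_quad.
have Hdd : dot d d <= A i ^ 2 by rewrite -vnorm_sq; apply: pow_incr; lra.
set T := nsum i A.
have Hlow : rsum (fun h => W i k J h * (f h x - f h y)) - alpha k * T * A i <= dot (vsub zi y) d.
  rewrite dot_sym /d dot_vsum.
  have -> : rsum (fun h => W i k J h * (f h x - f h y)) - alpha k * T * A i =
            rsum (fun h => W i k J h * (f h x - f h y - alpha k * T * L h)).
    rewrite /A -rsum_scal -rsum_sub; apply: rsum_ext => h; ring.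
  apply: rsum_le => h. rewrite /vscale dot_scall. apply: Rmult_le_compat_l => //.
  have G1 := grad_ineq (Hfconv h) (Hgrad h) zi y.
  have G2 := grad_ineq (Hfconv h) (Hgrad h) x zi.
  have Eneg : forall j, vsub y zi j = - 1 * vsub zi y j by move=> j; rewrite /vsub; ring.
  rewrite (dot_ext (fun j => erefl) Eneg) dot_sym dot_scall dot_sym in G1.
  have G3 := cs_neg (g h x) (vsub zi x).
  have G4 := HL h x Hx. have := vnorm_ge0 (vsub zi x). rewrite -/zi in IHd.
  have := vnorm_ge0 (g h x). move=> N1 N2.
  have : vnorm (g h x) * vnorm (vsub zi x) <= L h * (alpha k * T).
    apply: Rmult_le_compat => //.
  nra.
rewrite -/zi in IHm.
have Hdz : dot d (vsub zi y) = dot (vsub zi y) d by rewrite dot_sym.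
rewrite !nsumS -/T.
have : 2 * alpha k * (rsum (fun h => W i k J h * (f h x - f h y)) - alpha k * T * A i) <= 2 * alpha k * dot (vsub zi y) d.
  apply: Rmult_le_compat_l => //; lra.
have : alpha k ^ 2 * dot d d <= alpha k ^ 2 * A i ^ 2 by apply: Rmult_le_compat_l => //; nra.
nra.
Qed.

Unset Implicit Arguments. Set Strict Implicit.

Theorem lemma6 (S C D Delta : nat)
  (HS : (0 < S)%nat) (HC : (0 < C)%nat) (HD : (0 < D)%nat) (HDelta : (0 < Delta)%nat)
  (X : vec D -> Prop)
  (HXne : exists x, X x) (HXconv : convex_set X) (HXcomp : compact_set X)
  (P : vec D -> vec D) (HP : forall x, is_proj X x (P x))
  (f : 'I_C -> vec D -> R) (g : 'I_C -> vec D -> vec D) (L : 'I_C -> R)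
  (Hfconv : forall h, convex_fun (f h))
  (Hgrad : forall h, is_gradient (f h) (g h))
  (Hgcont : forall h, vcontinuous (g h))
  (HL : forall h x, X x -> vnorm (g h x) <= L h)
  (alpha : nat -> R) (Halpha : forall k, 0 < alpha k)
  (W : nat -> nat -> 'I_S -> 'I_C -> R)
  (HWnn : forall i k J h, 0 <= W i k J h)
  (M : R) (HM : 0 < M)
  (HSLC : forall k (h : 'I_C),
     rsum (fun i : 'I_Delta => rsum (fun J : 'I_S => W i k J h)) = M)
  (x00 : vec D) (Hx00 : X x00) :
  let F := fun x => rsum (fun h : 'I_C => f h x) in
  let xk := server_iter Delta P alpha W g x00 in
  forall (y : vec D), X y -> forall k : nat,
    vnorm (vsub (xk (k.+1)) y) ^ 2 <=
      vnorm (vsub (xk k) y) ^ 2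
      - 2 * M / INR S * alpha k * (F (xk k) - F y)
      + 1 / INR S * alpha k ^ 2 * C0sq Delta W L k.
Proof.
move=> F xk y Hy k.
have HL0 : forall h, 0 <= L h.
  move=> h; case: HXne => x0 Hx0. apply: Rle_trans (HL h x0 Hx0); exact: vnorm_ge0.
have Ha : forall k, 0 <= alpha k by move=> k'; apply: Rlt_le.
have Hxk : forall k, X (xk k).
  elim => [|k' IH] //=.
  apply: avg_X => // J.
  exact: (proj1 (local_lemma HXconv HP Hfconv Hgrad HL HL0 HWnn (Ha k') IH J Hy Delta)).
set x := xk k.
have Hx : X x := Hxk k.
set p := fun J : 'I_S => local_iter P alpha W g k x J Delta.
have Ek : xk k.+1 = vscale (1 / INR S) (vsum p) by [].
have HSp := INR_pos HS.
rewrite Ek !vnorm_sq.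
apply: (Rle_trans _ _ _ (jensen p y HS)).
set Q := dot (vsub x y) (vsub x y).
set A := fun J m => rsum (fun h => W m k J h * L h).
set EJ := fun J : 'I_S => nsum Delta (fun m => rsum (fun h => W m k J h * (f h x - f h y))).
set CJ := fun J : 'I_S => nsum Delta (fun m => A J m ^ 2 + 2 * A J m * nsum m (A J)).
have Hb : rsum (fun J => dot (vsub (p J) y) (vsub (p J) y)) <=
          rsum (fun J => Q - 2 * alpha k * EJ J + alpha k ^ 2 * CJ J).
  apply: rsum_le => J.
  exact: (proj2 (proj2 (local_lemma HXconv HP Hfconv Hgrad HL HL0 HWnn (Ha k) Hx J Hy Delta))).
have HC0 : rsum CJ = C0sq Delta W L k by [].
have HE : rsum EJ = M * (F x - F y).
  rewrite /EJ /nsum rsum_exch.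
  have -> : rsum (fun m : 'I_Delta => rsum (fun J : 'I_S => rsum (fun h => W m k J h * (f h x - f h y))))
          = rsum (fun m : 'I_Delta => rsum (fun h => rsum (fun J : 'I_S => W m k J h * (f h x - f h y)))).
    apply: rsum_ext => m; exact: rsum_exch.
  rewrite rsum_exch /F -rsum_sub -rsum_scal. apply: rsum_ext => h.
  rewrite -(HSLC k h) Rmult_comm -rsum_scal. apply: rsum_ext => m.
  rewrite -rsum_scal. apply: rsum_ext => J; ring.
have Hsum : rsum (fun J => Q - 2 * alpha k * EJ J + alpha k ^ 2 * CJ J)
           = INR S * Q - 2 * alpha k * rsum EJ + alpha k ^ 2 * rsum CJ.
  rewrite rsum_add rsum_sub rsum_const !rsum_scal //.
rewrite Hsum HE HC0 in Hb.
have := Rmult_le_compat_l (1 / INR S) _ _ ltac:(apply: Rlt_le; apply: Rdiv_lt_0_compat; lra) Hb.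
move=> H. apply: (Rle_trans _ _ _ H). right. field. lra.
Qed.
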